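(* There exists a $(k^2,k;4)$-MOHS for each $k\in\{9,21,27\}$, and there exists a $(121,11;9)$-MOHS.
   Context: Let $G$ be an abelian group of odd order $2v+1\ge 7$. A half-set of $G$ is a subset $V\subseteq G\setminus\{0\}$ containing exactly one element of each pair $\{g,-g\}$, $g\ne 0$. A $(v,k)$ Heffter system on $V$ is a partition of $V$ into blocks of size $k$, each summing to $0$ in $G$. Two Heffter systems on the same half-set are orthogonal if every block of one meets every block of the other in at most one element. A $(v,k;r)$-MOHS is a set of $r$ pairwise orthogonal $(v,k)$ Heffter systems on a common half-set of some abelian group of order $2v+1$. *)

(* Defs.v *)
From HB Require Import structures.
From mathcomp Require Import all_boot all_order all_algebra.
Set Implicit Arguments. Unset Strict Implicit. Unset Printing Implicit Defensive.
Import GRing.Theory.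
Local Open Scope ring_scope.

Definition half_set (G : finZmodType) (V : {set G}) : Prop :=
  (0 \notin V) /\ (forall g : G, g != 0 -> (g \in V) = ((- g) \notin V)).

Definition heffter_system (G : finZmodType) (V : {set G}) (k : nat)
    (P : {set {set G}}) : Prop :=
  partition P V /\
  (forall B, B \in P -> #|B| = k /\ \sum_(x in B) x = 0).

Definition orthogonal_hs (G : finZmodType) (P Q : {set {set G}}) : Prop :=
  forall B C, B \in P -> C \in Q -> (#|B :&: C| <= 1)%N.

Definition MOHS (v k r : nat) : Prop :=
  exists (G : finZmodType) (V : {set G}) (H : 'I_r -> {set {set G}}),
    [/\ #|G| = (2 * v).+1, half_set V,
        #|V| = v,
        (forall i, heffter_system V k (H i)) &
        (forall i j, i != j -> orthogonal_hs (H i) (H j))].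

(* Main.v *)
From HB Require Import structures.
Require Import Defs.
From mathcomp Require Import all_boot all_order all_algebra.
Set Implicit Arguments. Unset Strict Implicit. Unset Printing Implicit Defensive.
Import GRing.Theory.
Local Open Scope ring_scope.

Section Gen.
Variable G : finZmodType.
Variable memV : pred G.
Variable els : seq G.
Hypothesis Hels : forall g : G, g \in els.

Definition sumseq (b : seq G) := foldr (fun x a => x + a) 0 b.
Definition chk_block (idx : G -> nat) (k t : nat) (b : seq G) :=
  [&& size b == k, uniq b, sumseq b == 0, all memV b & all (fun x => idx x == t) b].
Definition chk_sys (k : nat) (p : (G -> nat) * seq (seq G)) :=
  all (fun t => chk_block p.1 k t (nth [::] p.2 t)) (iota 0 (size p.2)) &&
  all (fun x => memV x ==> (x \in nth [::] p.2 (p.1 x))) els.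
Definition chk_orth (p q : (G -> nat) * seq (seq G)) :=
  all (fun b => uniq (map q.1 b)) p.2.
Definition Pset (s : seq (seq G)) : {set {set G}} :=
  [set B | B \in map (fun b : seq G => [set x in b]) s].

Lemma sumseqE (b : seq G) : sumseq b = \sum_(x <- b) x.
Proof. by elim: b => [|x b IH]; rewrite ?big_nil ?big_cons //= IH. Qed.

Lemma PsetP (s : seq (seq G)) (B : {set G}) : reflect (exists2 b, b \in s & B = [set x in b]) (B \in Pset s).
Proof. by rewrite inE; apply: (iffP mapP). Qed.

Lemma chk_sys_block k (p : (G -> nat) * seq (seq G)) (b : seq G) : chk_sys k p -> b \in p.2 ->
  chk_block p.1 k (index b p.2) b.
Proof.
case/andP=> /allP H _ bin.
have := H (index b p.2); rewrite mem_iota add0n index_mem bin nth_index //.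
by apply.
Qed.

Lemma heff_of_chk k (p : (G -> nat) * seq (seq G)) : (0 < k)%N -> chk_sys k p ->
  heffter_system [set x | memV x] k (Pset p.2).
Proof.
move=> k0 Hs; have Hb := chk_sys_block Hs.
have Hcov := Hs; case/andP: Hcov => _ /allP Hcov'.
have Hcov x := Hcov' x (Hels x).
split.
- apply/and3P; split.
  + apply/eqP/setP => x; rewrite inE; apply/bigcupP/idP.
    * case=> B /PsetP [b bin ->]; rewrite inE => xb.
      by case/and5P: (Hb b bin) => _ _ _ /allP /(_ x xb).
    * move=> mx; exists [set y in nth [::] p.2 (p.1 x)]; last first.
        by rewrite inE; move/implyP: (Hcov x); apply.
      apply/PsetP; exists (nth [::] p.2 (p.1 x)) => //.
      apply: mem_nth; rewrite ltnNge; apply/negP => le.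
      by move/implyP: (Hcov x) => /(_ mx); rewrite nth_default.
  + apply/trivIsetP => A B /PsetP [a ain ->] /PsetP [b bin ->] neq.
    rewrite -setI_eq0; apply/eqP/setP => x; rewrite !inE.
    apply/negP => /andP [xa xb]; move/negP: neq; apply.
    case/and5P: (Hb a ain) => _ _ _ _ /allP /(_ x xa) /eqP ea.
    case/and5P: (Hb b bin) => _ _ _ _ /allP /(_ x xb) /eqP eb.
    by rewrite -(nth_index [::] ain) -(nth_index [::] bin) -ea -eb.
  + apply/negP => /PsetP [b bin] /setP e0.
    case/and5P: (Hb b bin) => /eqP sz _ _ _ _.
    case: b bin e0 sz => [|x b] bin e0 sz; first by rewrite -sz in k0.
    by move: (e0 x); rewrite !inE eqxx.
- move=> B /PsetP [b bin ->].
  case/and5P: (Hb b bin) => /eqP sz ub /eqP sm _ _; split.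
  + by rewrite cardsE; move/card_uniqP: ub => ->.
  + rewrite -[RHS]sm sumseqE big_uniq //; apply: eq_bigl => x; by rewrite inE.
Qed.

Lemma orth_of_chk k (p q : (G -> nat) * seq (seq G)) : chk_sys k q -> chk_orth p q -> orthogonal_hs (Pset p.2) (Pset q.2).
Proof.
move=> Hq /allP Ho B C /PsetP [b bin ->] /PsetP [c cin ->].
apply/card_le1_eqP => x y; rewrite !inE => /andP [xb xc] /andP [yb yc].
case/and5P: (chk_sys_block Hq cin) => _ _ _ _ /allP Hc.
move/eqP: (Hc x xc) => ex; move/eqP: (Hc y yc) => ey.
have /(uniqP 0%N) u := Ho b bin.
have := (u (index x b) (index y b)).
rewrite !inE !size_map !index_mem xb yb.
rewrite !(nth_map x) ?index_mem // !nth_index // ex ey => /(_ isT isT erefl) e.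
by rewrite -(nth_index x xb) -(nth_index x yb) e.
Qed.

End Gen.

Lemma mohs_check (G : finZmodType) (v k r : nat) (memV : pred G) (els : seq G)
  (Hels : forall g : G, g \in els) (Hu : uniq els)
  (d : (G -> nat) * seq (seq G)) (sys : seq ((G -> nat) * seq (seq G))) :
  #|G| = (2 * v).+1 -> size sys = r -> (0 < k)%N ->
  ~~ memV 0 ->
  all (fun g => (g != 0) ==> (memV g != memV (- g))) els ->
  count memV els = v ->
  all (chk_sys memV els k) sys ->
  all (fun i => all (fun j => (i == j) || chk_orth (nth d sys i) (nth d sys j)) (iota 0 r)) (iota 0 r) ->
  MOHS v k r.
Proof.
move=> cG ssys k0 m0 /allP hs' cnt hsys ho.
have hs g := hs' g (Hels g).
have {}hsys := all_nthP d hsys. have {}ho := allP ho.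
exists G, [set x | memV x], (fun i : 'I_r => Pset (nth d sys i).2).
split => //.
- split; first by rewrite inE.
  move=> g gn0; move/implyP: (hs g) => /(_ gn0).
  by rewrite !inE; case: (memV g); case: (memV (-g)).
- have /permP pe : perm_eq (enum G) els.
    apply: uniq_perm => //; first exact: enum_uniq.
    by move=> x; rewrite mem_enum Hels.
  by rewrite cardsE cardE size_filter -cnt -enumT pe.
- move=> i; apply: heff_of_chk => //; by apply: hsys; rewrite ssys ltn_ord.
- move=> i j nij; apply: (orth_of_chk (k:=k)); first by apply: hsys; rewrite ssys ltn_ord.
  have := ho i; rewrite mem_iota add0n ltn_ord => /(_ isT) /allP /(_ j).
  have nij' : (nat_of_ord i == j) = false by apply/negbTE.
  by rewrite mem_iota add0n ltn_ord nij' => /(_ isT).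
Qed.

From Stdlib Require Import BinNat.


Local Open Scope ring_scope.

Definition G3 := ('I_3 * ('I_3 * ('I_3 * ('I_3 * 'I_3))))%type.
HB.instance Definition _ := GRing.Zmodule.on G3.
HB.instance Definition _ := Finite.on G3.

Definition pairs {A B : eqType} (s : seq A) (t : seq B) := [seq (x, y) | x <- s, y <- t].
Lemma pairs_mem {A B : eqType} (s : seq A) (t : seq B) x y :
  x \in s -> y \in t -> (x, y) \in pairs s t.
Proof. by move=> xs yt; apply: allpairs_f. Qed.
Definition e3 : seq 'I_3 := map (@inZp 2) (iota 0 3).
Lemma e3_all (x : 'I_3) : x \in e3.
Proof.
apply/mapP; exists (val x); first by rewrite mem_iota ltn_ord.
by apply: val_inj; rewrite /= modn_small.
Qed.
Definition elsG3 : seq G3 := pairs e3 (pairs e3 (pairs e3 (pairs e3 e3))).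
Lemma elsG3_all (g : G3) : g \in elsG3.
Proof. by case: g => a [b [c [d e]]]; rewrite /elsG3 !pairs_mem ?e3_all. Qed.
Lemma elsG3_uniq : uniq elsG3.
Proof. by vm_compute. Qed.
Definition dig (n : N) (i : nat) : nat := N.to_nat (N.modulo (N.div n (N.pow 3 (N.of_nat i))) 3).
Definition enc3 (n : N) : G3 := (inZp (dig n 0), (inZp (dig n 1), (inZp (dig n 2), (inZp (dig n 3), inZp (dig n 4))))).
Definition code3 (x : G3) : N :=
  let: (a, (b, (c, (d, e)))) := x in
  N.of_nat (addn (nat_of_ord a) (muln 3 (addn (nat_of_ord b) (muln 3 (addn (nat_of_ord c) (muln 3 (addn (nat_of_ord d) (muln 3 (nat_of_ord e))))))))).
Definition idxN (bs : seq (seq N)) (n : N) : nat := find (has (N.eqb n)) bs.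
Definition memN (bs : seq (seq N)) (n : N) : bool := has (N.eqb n) (flatten bs).
Definition mk3 (B : seq (seq (seq N))) :=
  (fun x => memN (head [::] B) (code3 x),
   map (fun bs => (fun x => idxN bs (code3 x), map (map enc3) bs)) B).
Lemma cardG3 : #|(G3 : finZmodType)| = 243.
Proof. by rewrite !card_prod card_ord. Qed.

Definition mkp (p' : nat) (B : seq (seq (seq N))) :=
  let enc := fun n : N => (inZp (N.to_nat n) : 'I_p'.+2) in
  let code := fun x : 'I_p'.+2 => N.of_nat (nat_of_ord x) in
  (fun x => memN (head [::] B) (code x),
   map (fun bs => (fun x => idxN bs (code x), map (map enc) bs)) B).

Definition ordels n := map (@inZp n) (iota 0 n.+1).
Lemma ordels_all n (g : 'I_n.+1) : g \in ordels n.
Proof.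
apply/mapP; exists (val g); first by rewrite mem_iota ltn_ord.
by apply: val_inj; rewrite /= modn_small.
Qed.
Lemma ordels_uniq n : uniq (ordels n).
Proof.
rewrite map_inj_in_uniq ?iota_uniq // => x y; rewrite !mem_iota !add0n.
by move=> /andP[_ hx] /andP[_ hy] /(congr1 val) /=; rewrite !modn_small.
Qed.
Local Open Scope N_scope.
Definition B9 : seq (seq (seq N)) := [::
[:: [:: 1; 40; 133; 104; 85; 140; 58; 38; 53];
 [:: 4; 160; 43; 90; 14; 71; 69; 152; 49];
 [:: 16; 151; 9; 34; 56; 121; 113; 119; 33];
 [:: 64; 115; 36; 136; 61; 158; 126; 150; 132];
 [:: 93; 134; 144; 55; 81; 143; 15; 111; 39];
 [:: 46; 47; 87; 57; 161; 83; 60; 118; 156];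
 [:: 21; 25; 22; 65; 155; 6; 77; 146; 135];
 [:: 84; 100; 88; 97; 131; 24; 145; 95; 51];
 [:: 10; 74; 26; 62; 35; 96; 91; 54; 41]];
[:: [:: 160; 93; 40; 135; 156; 91; 16; 88; 36];
 [:: 43; 134; 133; 21; 46; 54; 151; 97; 136];
 [:: 90; 144; 104; 25; 47; 41; 9; 131; 61];
 [:: 14; 55; 85; 22; 87; 10; 34; 24; 158];
 [:: 71; 81; 140; 65; 57; 74; 56; 145; 126];
 [:: 69; 143; 58; 155; 161; 26; 121; 95; 150];
 [:: 152; 15; 38; 6; 83; 62; 113; 51; 132];
 [:: 49; 111; 53; 77; 60; 35; 119; 84; 64];
 [:: 4; 39; 1; 146; 118; 96; 33; 100; 115]];
[:: [:: 160; 134; 104; 22; 57; 26; 113; 84; 115];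
 [:: 43; 144; 85; 65; 161; 62; 119; 100; 36];
 [:: 90; 55; 140; 155; 83; 35; 33; 88; 136];
 [:: 14; 81; 58; 6; 60; 96; 16; 97; 61];
 [:: 71; 143; 38; 77; 118; 91; 151; 131; 158];
 [:: 69; 15; 53; 146; 156; 54; 9; 24; 126];
 [:: 152; 111; 1; 135; 46; 41; 34; 145; 150];
 [:: 49; 39; 40; 21; 47; 10; 56; 95; 132];
 [:: 4; 93; 133; 25; 87; 74; 121; 51; 64]];
[:: [:: 160; 144; 140; 6; 118; 54; 34; 95; 64];
 [:: 43; 55; 58; 77; 156; 41; 56; 51; 115];
 [:: 90; 81; 38; 146; 46; 10; 121; 84; 36];
 [:: 14; 143; 53; 135; 47; 74; 113; 100; 136];
 [:: 71; 15; 1; 21; 87; 26; 119; 88; 61];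
 [:: 69; 111; 40; 25; 57; 62; 33; 97; 158];
 [:: 152; 39; 133; 22; 161; 35; 16; 131; 126];
 [:: 49; 93; 104; 65; 83; 96; 151; 24; 150];
 [:: 4; 134; 85; 155; 60; 91; 9; 145; 132]]].

Local Close Scope N_scope.
Definition s9 := mkp 161 B9.
Lemma mohs9 : MOHS (9^2) 9 4.
Proof.
refine (@mohs_check ('I_163) (9^2) 9 4 s9.1 (ordels 162) (@ordels_all 162) (ordels_uniq 162) (fun _ => O, [::]) s9.2 _ _ _ _ _ _ _ _).
- by rewrite card_ord.
- by [].
- by [].
- vm_compute; reflexivity.
- change (all (fun g : 'I_163 => (g != 0%R) ==> (s9.1 g != s9.1 (- g)%R)) (ordels 162)).
  vm_compute; reflexivity.
- vm_compute; reflexivity.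
- vm_compute; reflexivity.
- vm_compute; reflexivity.
Qed.
Local Open Scope N_scope.
Definition B21 : seq (seq (seq N)) := [::
[:: [:: 1; 729; 758; 707; 614; 808; 71; 545; 838; 749; 327; 856; 626; 726; 337; 199; 259; 732; 296; 332; 86];
 [:: 4; 267; 383; 179; 690; 583; 284; 414; 703; 347; 425; 775; 738; 255; 465; 796; 153; 279; 301; 445; 344];
 [:: 16; 185; 649; 716; 111; 566; 253; 773; 163; 505; 817; 451; 303; 137; 94; 535; 612; 233; 321; 14; 493];
 [:: 64; 740; 830; 215; 444; 498; 129; 443; 652; 254; 619; 38; 329; 548; 376; 374; 682; 49; 401; 56; 206];
 [:: 256; 311; 671; 860; 10; 226; 516; 6; 842; 133; 710; 152; 433; 426; 621; 613; 79; 196; 721; 224; 824];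
 [:: 141; 361; 35; 791; 40; 21; 298; 24; 719; 532; 191; 608; 849; 821; 718; 686; 316; 784; 235; 13; 647];
 [:: 564; 561; 140; 515; 160; 84; 309; 96; 227; 362; 764; 666; 747; 635; 223; 95; 381; 487; 57; 52; 822];
 [:: 490; 478; 560; 294; 640; 336; 353; 384; 25; 565; 407; 15; 339; 774; 9; 380; 641; 182; 228; 208; 639];
 [:: 194; 146; 474; 293; 794; 461; 529; 653; 100; 494; 745; 60; 473; 447; 36; 637; 798; 728; 29; 832; 790];
 [:: 776; 584; 130; 289; 527; 78; 350; 846; 400; 210; 331; 240; 126; 22; 144; 782; 543; 263; 116; 679; 511];
 [:: 455; 570; 520; 273; 342; 312; 517; 735; 717; 840; 441; 77; 504; 88; 576; 479; 406; 169; 464; 67; 278];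
 [:: 54; 514; 314; 209; 485; 365; 302; 291; 219; 711; 881; 308; 250; 352; 538; 150; 741; 676; 90; 268; 229];
 [:: 216; 290; 373; 836; 174; 577; 325; 281; 876; 195; 875; 349; 117; 525; 386; 600; 315; 55; 360; 189; 33];
 [:: 864; 277; 609; 695; 696; 542; 417; 241; 855; 780; 851; 513; 468; 334; 661; 634; 377; 220; 557; 756; 132];
 [:: 807; 225; 670; 131; 135; 402; 785; 81; 771; 471; 755; 286; 106; 453; 878; 770; 625; 880; 462; 375; 528];
 [:: 579; 17; 31; 524; 540; 725; 491; 324; 435; 118; 371; 261; 424; 46; 863; 431; 734; 871; 82; 617; 346];
 [:: 550; 68; 124; 330; 394; 251; 198; 413; 857; 472; 601; 161; 813; 184; 803; 841; 287; 835; 328; 702; 501];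
 [:: 434; 272; 496; 437; 693; 121; 792; 769; 779; 122; 638; 644; 603; 736; 563; 715; 265; 691; 429; 159; 238];
 [:: 853; 205; 218; 865; 123; 484; 519; 427; 467; 488; 786; 810; 646; 295; 486; 211; 177; 115; 833; 636; 69];
 [:: 763; 820; 872; 811; 492; 170; 310; 825; 102; 186; 495; 591; 818; 297; 178; 844; 708; 460; 683; 778; 276];
 [:: 403; 631; 839; 595; 202; 680; 357; 651; 408; 744; 214; 598; 623; 305; 712; 727; 183; 74; 83; 463; 221]];
[:: [:: 259; 229; 10; 493; 639; 124; 295; 223; 375; 690; 776; 876; 277; 434; 540; 447; 186; 408; 570; 40; 56];
 [:: 732; 54; 226; 16; 490; 330; 486; 95; 528; 583; 584; 195; 609; 272; 725; 36; 495; 744; 520; 21; 206];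
 [:: 296; 514; 516; 185; 478; 394; 211; 381; 807; 284; 130; 875; 695; 496; 491; 637; 591; 214; 273; 298; 64];
 [:: 332; 314; 6; 649; 560; 251; 177; 487; 225; 414; 289; 349; 696; 437; 324; 798; 818; 598; 342; 24; 740];
 [:: 86; 209; 842; 716; 294; 198; 115; 57; 670; 703; 527; 117; 542; 693; 435; 728; 297; 623; 312; 719; 830];
 [:: 1; 485; 133; 111; 640; 413; 833; 52; 131; 347; 78; 525; 417; 121; 118; 29; 178; 305; 517; 532; 215];
 [:: 729; 365; 710; 566; 336; 857; 636; 822; 135; 425; 350; 386; 241; 792; 371; 832; 844; 712; 735; 191; 444];
 [:: 758; 302; 152; 253; 353; 472; 69; 564; 402; 775; 846; 600; 855; 769; 261; 790; 708; 727; 717; 608; 498];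
 [:: 707; 291; 433; 773; 384; 601; 853; 561; 785; 738; 400; 315; 780; 779; 424; 194; 460; 183; 840; 849; 129];
 [:: 614; 219; 426; 163; 25; 161; 205; 140; 81; 255; 210; 55; 851; 122; 46; 146; 683; 74; 441; 821; 443];
 [:: 808; 711; 621; 505; 565; 813; 218; 515; 771; 465; 331; 360; 513; 638; 863; 474; 778; 83; 77; 718; 652];
 [:: 71; 881; 613; 817; 407; 184; 865; 160; 471; 796; 240; 189; 468; 644; 431; 293; 276; 463; 504; 686; 254];
 [:: 545; 308; 79; 451; 15; 803; 123; 84; 755; 153; 126; 33; 334; 603; 734; 794; 763; 221; 88; 316; 619];
 [:: 838; 250; 196; 303; 339; 841; 484; 309; 286; 279; 22; 216; 661; 736; 871; 461; 820; 403; 576; 784; 38];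
 [:: 749; 352; 721; 137; 774; 287; 519; 96; 106; 301; 144; 290; 634; 563; 82; 529; 872; 631; 479; 235; 329];
 [:: 327; 538; 224; 94; 9; 835; 427; 227; 453; 445; 782; 373; 377; 715; 617; 653; 811; 839; 406; 13; 548];
 [:: 856; 150; 824; 535; 380; 328; 467; 362; 878; 344; 543; 836; 220; 265; 346; 100; 492; 595; 169; 647; 376];
 [:: 626; 741; 256; 612; 641; 702; 488; 764; 770; 4; 263; 174; 557; 691; 579; 494; 170; 202; 464; 141; 374];
 [:: 726; 676; 311; 233; 182; 501; 786; 666; 625; 267; 116; 577; 756; 429; 17; 745; 310; 680; 67; 361; 682];
 [:: 337; 90; 671; 321; 228; 550; 810; 747; 880; 383; 679; 325; 132; 159; 31; 60; 825; 357; 278; 35; 49];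
 [:: 199; 268; 860; 14; 208; 68; 646; 635; 462; 179; 511; 281; 864; 238; 524; 473; 102; 651; 455; 791; 401]];
[:: [:: 259; 54; 516; 649; 294; 413; 636; 564; 785; 255; 331; 189; 334; 736; 82; 653; 492; 202; 67; 35; 401];
 [:: 732; 514; 6; 716; 640; 857; 69; 561; 81; 465; 240; 33; 661; 563; 617; 100; 170; 680; 278; 791; 56];
 [:: 296; 314; 842; 111; 336; 472; 853; 140; 771; 796; 126; 216; 634; 715; 346; 494; 310; 357; 455; 40; 206];
 [:: 332; 209; 133; 566; 353; 601; 205; 515; 471; 153; 22; 290; 377; 265; 579; 745; 825; 651; 570; 21; 64];
 [:: 86; 485; 710; 253; 384; 161; 218; 160; 755; 279; 144; 373; 220; 691; 17; 60; 102; 408; 520; 298; 740];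
 [:: 1; 365; 152; 773; 25; 813; 865; 84; 286; 301; 782; 836; 557; 429; 31; 473; 186; 744; 273; 24; 830];
 [:: 729; 302; 433; 163; 565; 184; 123; 309; 106; 445; 543; 174; 756; 159; 524; 447; 495; 214; 342; 719; 215];
 [:: 758; 291; 426; 505; 407; 803; 484; 96; 453; 344; 263; 577; 132; 238; 540; 36; 591; 598; 312; 532; 444];
 [:: 707; 219; 621; 817; 15; 841; 519; 227; 878; 4; 116; 325; 864; 434; 725; 637; 818; 623; 517; 191; 498];
 [:: 614; 711; 613; 451; 339; 287; 427; 362; 770; 267; 679; 281; 277; 272; 491; 798; 297; 305; 735; 608; 129];
 [:: 808; 881; 79; 303; 774; 835; 467; 764; 625; 383; 511; 876; 609; 496; 324; 728; 178; 712; 717; 849; 443];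
 [:: 71; 308; 196; 137; 9; 328; 488; 666; 880; 179; 776; 195; 695; 437; 435; 29; 844; 727; 840; 821; 652];
 [:: 545; 250; 721; 94; 380; 702; 786; 747; 462; 690; 584; 875; 696; 693; 118; 832; 708; 183; 441; 718; 254];
 [:: 838; 352; 224; 535; 641; 501; 810; 635; 375; 583; 130; 349; 542; 121; 371; 790; 460; 74; 77; 686; 619];
 [:: 749; 538; 824; 612; 182; 550; 646; 223; 528; 284; 289; 117; 417; 792; 261; 194; 683; 83; 504; 316; 38];
 [:: 327; 150; 256; 233; 228; 68; 295; 95; 807; 414; 527; 525; 241; 769; 424; 146; 778; 463; 88; 784; 329];
 [:: 856; 741; 311; 321; 208; 124; 486; 381; 225; 703; 78; 386; 855; 779; 46; 474; 276; 221; 576; 235; 548];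
 [:: 626; 676; 671; 14; 639; 330; 211; 487; 670; 347; 350; 600; 780; 122; 863; 293; 763; 403; 479; 13; 376];
 [:: 726; 90; 860; 493; 490; 394; 177; 57; 131; 425; 846; 315; 851; 638; 431; 794; 820; 631; 406; 647; 374];
 [:: 337; 268; 10; 16; 478; 251; 115; 52; 135; 775; 400; 55; 513; 644; 734; 461; 872; 839; 169; 141; 682];
 [:: 199; 229; 226; 185; 560; 198; 833; 822; 402; 738; 210; 360; 468; 603; 871; 529; 811; 595; 464; 361; 49]];
[:: [:: 259; 514; 842; 566; 384; 813; 123; 96; 878; 267; 511; 195; 696; 121; 261; 146; 276; 403; 406; 141; 49];
 [:: 732; 314; 133; 253; 25; 184; 484; 227; 770; 383; 776; 875; 542; 792; 424; 474; 763; 631; 169; 361; 401];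
 [:: 296; 209; 710; 773; 565; 803; 519; 362; 625; 179; 584; 349; 417; 769; 46; 293; 820; 839; 464; 35; 56];
 [:: 332; 485; 152; 163; 407; 841; 427; 764; 880; 690; 130; 117; 241; 779; 863; 794; 872; 595; 67; 791; 206];
 [:: 86; 365; 433; 505; 15; 287; 467; 666; 462; 583; 289; 525; 855; 122; 431; 461; 811; 202; 278; 40; 64];
 [:: 1; 302; 426; 817; 339; 835; 488; 747; 375; 284; 527; 386; 780; 638; 734; 529; 492; 680; 455; 21; 740];
 [:: 729; 291; 621; 451; 774; 328; 786; 635; 528; 414; 78; 600; 851; 644; 871; 653; 170; 357; 570; 298; 830];
 [:: 758; 219; 613; 303; 9; 702; 810; 223; 807; 703; 350; 315; 513; 603; 82; 100; 310; 651; 520; 24; 215];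
 [:: 707; 711; 79; 137; 380; 501; 646; 95; 225; 347; 846; 55; 468; 736; 617; 494; 825; 408; 273; 719; 444];
 [:: 614; 881; 196; 94; 641; 550; 295; 381; 670; 425; 400; 360; 334; 563; 346; 745; 102; 744; 342; 532; 498];
 [:: 808; 308; 721; 535; 182; 68; 486; 487; 131; 775; 210; 189; 661; 715; 579; 60; 186; 214; 312; 191; 129];
 [:: 71; 250; 224; 612; 228; 124; 211; 57; 135; 738; 331; 33; 634; 265; 17; 473; 495; 598; 517; 608; 443];
 [:: 545; 352; 824; 233; 208; 330; 177; 52; 402; 255; 240; 216; 377; 691; 31; 447; 591; 623; 735; 849; 652];
 [:: 838; 538; 256; 321; 639; 394; 115; 822; 785; 465; 126; 290; 220; 429; 524; 36; 818; 305; 717; 821; 254];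
 [:: 749; 150; 311; 14; 490; 251; 833; 564; 81; 796; 22; 373; 557; 159; 540; 637; 297; 712; 840; 718; 619];
 [:: 327; 741; 671; 493; 478; 198; 636; 561; 771; 153; 144; 836; 756; 238; 725; 798; 178; 727; 441; 686; 38];
 [:: 856; 676; 860; 16; 560; 413; 69; 140; 471; 279; 782; 174; 132; 434; 491; 728; 844; 183; 77; 316; 329];
 [:: 626; 90; 10; 185; 294; 857; 853; 515; 755; 301; 543; 577; 864; 272; 324; 29; 708; 74; 504; 784; 548];
 [:: 726; 268; 226; 649; 640; 472; 205; 160; 286; 445; 263; 325; 277; 496; 435; 832; 460; 83; 88; 235; 376];
 [:: 337; 229; 516; 716; 336; 601; 218; 84; 106; 344; 116; 281; 609; 437; 118; 790; 683; 463; 576; 13; 374];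
 [:: 199; 54; 6; 111; 353; 161; 865; 309; 453; 4; 679; 876; 695; 693; 371; 194; 778; 221; 479; 647; 682]]].

Local Close Scope N_scope.
Definition s21 := mkp 881 B21.
Lemma mohs21 : MOHS (21^2) 21 4.
Proof.
refine (@mohs_check ('I_883) (21^2) 21 4 s21.1 (ordels 882) (@ordels_all 882) (ordels_uniq 882) (fun _ => O, [::]) s21.2 _ _ _ _ _ _ _ _).
- by rewrite card_ord.
- by [].
- by [].
- vm_compute; reflexivity.
- change (all (fun g : 'I_883 => (g != 0%R) ==> (s21.1 g != s21.1 (- g)%R)) (ordels 882)).
  vm_compute; reflexivity.
- vm_compute; reflexivity.
- vm_compute; reflexivity.
- vm_compute; reflexivity.
Qed.
Local Open Scope N_scope.
Definition B27 : seq (seq (seq N)) := [::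
[:: [:: 1; 1080; 659; 1187; 958; 209; 1034; 585; 53; 339; 1370; 174; 1168; 864; 819; 366; 1350; 459; 1119; 468; 626; 563; 1096; 431; 59; 983; 947];
 [:: 9; 966; 95; 470; 1327; 422; 552; 888; 477; 133; 658; 107; 299; 481; 76; 376; 478; 1213; 1317; 1294; 1257; 690; 1110; 961; 531; 93; 1228];
 [:: 81; 1399; 855; 1312; 271; 880; 591; 697; 1375; 1197; 86; 963; 1232; 1411; 684; 466; 1384; 704; 181; 1433; 1100; 374; 1236; 1354; 402; 837; 839];
 [:: 729; 919; 400; 136; 980; 625; 942; 437; 703; 560; 774; 1372; 875; 1027; 320; 1276; 784; 500; 170; 1225; 1146; 448; 911; 514; 700; 238; 256];
 [:: 725; 976; 682; 1224; 66; 1248; 1183; 1015; 491; 663; 1130; 676; 580; 489; 1421; 1271; 1220; 123; 71; 812; 101; 1114; 904; 249; 464; 683; 845];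
 [:: 689; 30; 302; 803; 594; 1019; 434; 381; 42; 131; 1416; 248; 843; 24; 1117; 1226; 767; 1107; 639; 13; 909; 1272; 841; 782; 1258; 311; 310];
 [:: 365; 270; 1259; 1391; 969; 417; 988; 511; 378; 1179; 1072; 773; 292; 216; 1299; 821; 1067; 1209; 1374; 117; 886; 1235; 274; 1202; 1109; 1340; 1331];
 [:: 367; 971; 1118; 847; 1426; 835; 138; 222; 484; 398; 894; 1121; 1169; 485; 19; 94; 849; 668; 694; 1053; 679; 902; 1007; 605; 1227; 388; 307];
 [:: 385; 1444; 1308; 328; 1162; 220; 1242; 539; 1438; 664; 751; 1335; 308; 1447; 171; 846; 346; 176; 410; 723; 275; 823; 309; 1068; 830; 574; 1304];
 [:: 547; 1324; 100; 34; 245; 521; 965; 474; 1270; 140; 923; 343; 1313; 1351; 80; 319; 196; 125; 772; 671; 1016; 112; 1322; 858; 175; 789; 64];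
 [:: 546; 244; 900; 306; 746; 312; 1390; 1348; 1217; 1260; 1012; 169; 145; 487; 720; 1412; 305; 1125; 1112; 203; 390; 1008; 226; 427; 116; 1265; 576];
 [:: 537; 737; 805; 1295; 878; 1349; 838; 460; 740; 1127; 354; 62; 1305; 6; 644; 1036; 1286; 1371; 1254; 368; 592; 318; 575; 925; 1044; 1172; 807];
 [:: 456; 797; 1409; 1442; 607; 469; 247; 1222; 824; 1389; 268; 558; 73; 54; 1419; 570; 1361; 667; 1073; 394; 951; 1403; 798; 1030; 642; 335; 1427];
 [:: 1186; 1337; 1009; 1306; 1086; 1303; 764; 785; 121; 829; 953; 645; 657; 486; 1099; 753; 577; 167; 903; 628; 1264; 955; 1346; 516; 1401; 97; 1171];
 [:: 461; 361; 327; 82; 1020; 55; 1040; 1229; 1089; 166; 1282; 1428; 77; 1456; 1137; 941; 816; 44; 832; 1275; 1163; 1300; 442; 267; 937; 873; 326];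
 [:: 1231; 331; 25; 738; 426; 495; 606; 848; 1047; 35; 1325; 1180; 693; 1432; 20; 1174; 49; 396; 193; 1262; 254; 28; 1060; 944; 1138; 562; 16];
 [:: 866; 61; 225; 806; 916; 78; 1077; 337; 669; 315; 253; 407; 401; 1216; 180; 353; 441; 646; 278; 1145; 827; 252; 786; 1201; 29; 681; 144];
 [:: 499; 549; 566; 1418; 949; 702; 939; 115; 185; 1376; 818; 745; 691; 731; 161; 259; 1051; 1437; 1043; 92; 148; 809; 1238; 596; 261; 293; 1296];
 [:: 114; 564; 717; 1090; 1246; 482; 1156; 1035; 206; 712; 67; 869; 383; 743; 1449; 872; 705; 1261; 633; 828; 1332; 1445; 929; 987; 890; 1178; 1451];
 [:: 1026; 699; 617; 1056; 1001; 1420; 191; 561; 395; 572; 603; 526; 529; 851; 1369; 553; 509; 1136; 1320; 157; 316; 1333; 1066; 129; 715; 389; 1387];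
 [:: 480; 455; 1176; 750; 255; 1108; 260; 672; 637; 771; 1050; 357; 384; 364; 649; 600; 204; 11; 208; 1413; 1385; 325; 840; 1161; 599; 583; 811];
 [:: 1402; 1177; 371; 914; 836; 1218; 881; 212; 1356; 1103; 696; 295; 538; 358; 5; 1023; 377; 99; 413; 1045; 793; 7; 265; 236; 1014; 870; 4];
 [:: 946; 380; 421; 931; 229; 749; 634; 449; 532; 1173; 428; 1196; 465; 304; 45; 453; 475; 891; 799; 651; 1301; 63; 926; 665; 372; 535; 36];
 [:: 1219; 502; 871; 1084; 602; 905; 1329; 1123; 411; 344; 934; 551; 1267; 1277; 405; 1159; 1357; 724; 1355; 23; 37; 567; 1039; 149; 430; 438; 324];
 [:: 758; 141; 544; 1002; 1041; 850; 289; 1353; 781; 178; 1111; 582; 1190; 1280; 727; 218; 541; 680; 523; 207; 333; 726; 597; 1341; 952; 1024; 1457];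
 [:: 986; 1269; 519; 264; 615; 355; 1142; 505; 1193; 143; 1245; 861; 497; 1307; 707; 503; 492; 284; 330; 404; 79; 698; 996; 397; 1273; 462; 1441];
 [:: 120; 1208; 294; 917; 1158; 277; 65; 168; 524; 1287; 992; 454; 96; 91; 527; 150; 51; 1097; 52; 718; 711; 446; 210; 655; 1244; 1240; 1297]];
[:: [:: 174; 1067; 1372; 646; 421; 1226; 880; 411; 141; 797; 245; 157; 1086; 605; 1231; 583; 355; 116; 740; 308; 731; 65; 1317; 743; 1428; 904; 1218];
 [:: 1168; 1209; 875; 278; 931; 767; 591; 344; 544; 1409; 521; 316; 1303; 1227; 331; 811; 1142; 1265; 1127; 1447; 161; 168; 1294; 1449; 77; 249; 881];
 [:: 864; 1374; 1027; 1145; 229; 1107; 697; 934; 1002; 1442; 965; 1333; 764; 388; 25; 480; 505; 576; 354; 171; 259; 524; 1257; 872; 1456; 464; 212];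
 [:: 819; 117; 320; 827; 749; 639; 1375; 551; 1041; 607; 474; 1066; 785; 307; 738; 455; 1193; 546; 62; 846; 1051; 1287; 690; 705; 1137; 683; 1356];
 [:: 366; 886; 1276; 252; 634; 13; 1197; 1267; 850; 469; 1270; 129; 121; 367; 426; 1176; 143; 244; 1305; 346; 1437; 992; 1110; 1261; 941; 845; 1103];
 [:: 1350; 1235; 784; 786; 449; 909; 86; 1277; 289; 247; 140; 715; 829; 971; 495; 750; 1245; 900; 6; 176; 1043; 454; 961; 633; 816; 725; 696];
 [:: 459; 274; 500; 1201; 532; 1272; 963; 405; 1353; 1222; 923; 389; 953; 1118; 606; 255; 861; 306; 644; 410; 92; 96; 531; 828; 44; 976; 295];
 [:: 1119; 1202; 170; 29; 1173; 841; 1232; 1159; 781; 824; 343; 1387; 645; 847; 848; 1108; 497; 746; 1036; 723; 148; 91; 93; 1332; 832; 682; 538];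
 [:: 468; 1109; 1225; 681; 428; 782; 1411; 1357; 178; 1389; 1313; 1026; 657; 1426; 1047; 260; 1307; 312; 1286; 275; 809; 527; 1228; 1445; 1275; 1224; 358];
 [:: 626; 1340; 1146; 144; 1196; 1258; 684; 724; 1111; 268; 1351; 699; 486; 835; 35; 672; 707; 1390; 1371; 823; 1238; 150; 9; 929; 1163; 66; 5];
 [:: 563; 1331; 448; 866; 465; 311; 466; 1355; 582; 558; 80; 617; 1099; 138; 1325; 637; 503; 1348; 1254; 309; 596; 51; 966; 987; 1300; 1248; 1023];
 [:: 1096; 365; 911; 61; 304; 310; 1384; 23; 1190; 73; 319; 1056; 753; 222; 1180; 771; 492; 1217; 368; 1068; 261; 1097; 95; 890; 442; 1183; 377];
 [:: 431; 270; 514; 225; 45; 689; 704; 37; 1280; 54; 196; 1001; 577; 484; 693; 1050; 284; 1260; 592; 830; 293; 52; 470; 1178; 267; 1015; 99];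
 [:: 59; 1259; 700; 806; 453; 30; 181; 567; 727; 1419; 125; 1420; 167; 398; 1432; 357; 330; 1012; 318; 574; 1296; 718; 1327; 1451; 937; 491; 413];
 [:: 983; 1391; 238; 916; 475; 302; 1433; 1039; 218; 570; 772; 191; 903; 894; 20; 384; 404; 169; 575; 1304; 499; 711; 422; 114; 873; 663; 1045];
 [:: 947; 969; 256; 78; 891; 803; 1100; 149; 541; 1361; 671; 561; 628; 1121; 1174; 364; 79; 145; 925; 385; 549; 446; 552; 564; 326; 1130; 793];
 [:: 1; 417; 729; 1077; 799; 594; 374; 430; 680; 667; 1016; 395; 1264; 1169; 49; 649; 698; 487; 1044; 1444; 566; 210; 888; 717; 461; 676; 7];
 [:: 1080; 988; 919; 337; 651; 1019; 1236; 438; 523; 1073; 112; 572; 955; 485; 396; 600; 996; 720; 1172; 1308; 1418; 655; 477; 1090; 361; 580; 265];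
 [:: 659; 511; 400; 669; 1301; 434; 1354; 324; 207; 394; 1322; 603; 1346; 19; 193; 204; 397; 1412; 807; 328; 949; 1244; 133; 1246; 327; 489; 236];
 [:: 1187; 378; 136; 315; 63; 381; 402; 1219; 333; 951; 858; 526; 516; 94; 1262; 11; 1273; 305; 537; 1162; 702; 1240; 658; 482; 82; 1421; 1014];
 [:: 958; 1179; 980; 253; 926; 42; 837; 502; 726; 1403; 175; 529; 1401; 849; 254; 208; 462; 1125; 737; 220; 939; 1297; 107; 1156; 1020; 1271; 870];
 [:: 209; 1072; 625; 407; 665; 131; 839; 871; 597; 798; 789; 851; 97; 668; 28; 1413; 1441; 1112; 805; 1242; 115; 120; 299; 1035; 55; 1220; 4];
 [:: 1034; 773; 942; 401; 372; 1416; 81; 1084; 1341; 1030; 64; 1369; 1171; 694; 1060; 1385; 986; 203; 1295; 539; 185; 1208; 481; 206; 1040; 123; 1402];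
 [:: 585; 292; 437; 1216; 535; 248; 1399; 602; 952; 642; 547; 553; 1186; 1053; 944; 325; 1269; 390; 878; 1438; 1376; 294; 76; 712; 1229; 71; 1177];
 [:: 53; 216; 703; 180; 36; 843; 855; 905; 1024; 335; 1324; 509; 1337; 679; 1138; 840; 519; 1008; 1349; 664; 818; 917; 376; 67; 1089; 812; 371];
 [:: 339; 1299; 560; 353; 946; 24; 1312; 1329; 1457; 1427; 100; 1136; 1009; 902; 562; 1161; 264; 226; 838; 751; 745; 1158; 478; 869; 166; 101; 914];
 [:: 1370; 821; 774; 441; 380; 1117; 271; 1123; 758; 456; 34; 1320; 1306; 1007; 16; 599; 615; 427; 460; 1335; 691; 277; 1213; 383; 1282; 1114; 836]];
[:: [:: 174; 1209; 1027; 827; 634; 909; 963; 1159; 178; 268; 80; 1056; 577; 398; 20; 364; 698; 720; 807; 1162; 939; 120; 481; 712; 1089; 101; 836];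
 [:: 1168; 1374; 320; 252; 449; 1272; 1232; 1357; 1111; 558; 319; 1001; 167; 894; 1174; 649; 996; 1412; 537; 220; 115; 1208; 76; 67; 166; 1114; 1218];
 [:: 864; 117; 1276; 786; 532; 841; 1411; 724; 582; 73; 196; 1420; 903; 1121; 49; 600; 397; 305; 737; 1242; 185; 294; 376; 869; 1282; 904; 881];
 [:: 819; 886; 784; 1201; 1173; 782; 684; 1355; 1190; 54; 125; 191; 628; 1169; 396; 204; 1273; 1125; 805; 539; 1376; 917; 478; 383; 1428; 249; 212];
 [:: 366; 1235; 500; 29; 428; 1258; 466; 23; 1280; 1419; 772; 561; 1264; 485; 193; 11; 462; 1112; 1295; 1438; 818; 1158; 1213; 743; 77; 464; 1356];
 [:: 1350; 274; 170; 681; 1196; 311; 1384; 37; 727; 570; 671; 395; 955; 19; 1262; 208; 1441; 203; 878; 664; 745; 277; 1317; 1449; 1456; 683; 1103];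
 [:: 459; 1202; 1225; 144; 465; 310; 704; 567; 218; 1361; 1016; 572; 1346; 94; 254; 1413; 986; 390; 1349; 751; 691; 65; 1294; 872; 1137; 845; 696];
 [:: 1119; 1109; 1146; 866; 304; 689; 181; 1039; 541; 667; 112; 603; 516; 849; 28; 1385; 1269; 1008; 838; 1335; 731; 168; 1257; 705; 941; 725; 295];
 [:: 468; 1340; 448; 61; 45; 30; 1433; 149; 680; 1073; 1322; 526; 1401; 668; 1060; 325; 519; 226; 460; 308; 161; 524; 690; 1261; 816; 976; 538];
 [:: 626; 1331; 911; 225; 453; 302; 1100; 430; 523; 394; 858; 529; 97; 694; 944; 840; 264; 427; 740; 1447; 259; 1287; 1110; 633; 44; 682; 358];
 [:: 563; 365; 514; 806; 475; 803; 374; 438; 207; 951; 175; 851; 1171; 1053; 1138; 1161; 615; 116; 1127; 171; 1051; 992; 961; 828; 832; 1224; 5];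
 [:: 1096; 270; 700; 916; 891; 594; 1236; 324; 333; 1403; 789; 1369; 1186; 679; 562; 599; 355; 1265; 354; 846; 1437; 454; 531; 1332; 1275; 66; 1023];
 [:: 431; 1259; 238; 78; 799; 1019; 1354; 1219; 726; 798; 64; 553; 1337; 902; 16; 583; 1142; 576; 62; 346; 1043; 96; 93; 1445; 1163; 1248; 377];
 [:: 59; 1391; 256; 1077; 651; 434; 402; 502; 597; 1030; 547; 509; 1009; 1007; 1231; 811; 505; 546; 1305; 176; 92; 91; 1228; 929; 1300; 1183; 99];
 [:: 983; 969; 729; 337; 1301; 381; 837; 871; 1341; 642; 1324; 1136; 1306; 605; 331; 480; 1193; 244; 6; 410; 148; 527; 9; 987; 442; 1015; 413];
 [:: 947; 417; 919; 669; 63; 42; 839; 1084; 952; 335; 100; 1320; 1086; 1227; 25; 455; 143; 900; 644; 723; 809; 150; 966; 890; 267; 491; 1045];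
 [:: 1; 988; 400; 315; 926; 131; 81; 602; 1024; 1427; 34; 157; 1303; 388; 738; 1176; 1245; 306; 1036; 275; 1238; 51; 95; 1178; 937; 663; 793];
 [:: 1080; 511; 136; 253; 665; 1416; 1399; 905; 1457; 456; 245; 316; 764; 307; 426; 750; 861; 746; 1286; 823; 596; 1097; 470; 1451; 873; 1130; 7];
 [:: 659; 378; 980; 407; 372; 248; 855; 1329; 758; 797; 521; 1333; 785; 367; 495; 255; 497; 312; 1371; 309; 261; 52; 1327; 114; 326; 676; 265];
 [:: 1187; 1179; 625; 401; 535; 843; 1312; 1123; 141; 1409; 965; 1066; 121; 971; 606; 1108; 1307; 1390; 1254; 1068; 293; 718; 422; 564; 461; 580; 236];
 [:: 958; 1072; 942; 1216; 36; 24; 271; 411; 544; 1442; 474; 129; 829; 1118; 848; 260; 707; 1348; 368; 830; 1296; 711; 552; 717; 361; 489; 1014];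
 [:: 209; 773; 437; 180; 946; 1117; 880; 344; 1002; 607; 1270; 715; 953; 847; 1047; 672; 503; 1217; 592; 574; 499; 446; 888; 1090; 327; 1421; 870];
 [:: 1034; 292; 703; 353; 380; 1226; 591; 934; 1041; 469; 140; 389; 645; 1426; 35; 637; 492; 1260; 318; 1304; 549; 210; 477; 1246; 82; 1271; 4];
 [:: 585; 216; 560; 441; 421; 767; 697; 551; 850; 247; 923; 1387; 657; 835; 1325; 771; 284; 1012; 575; 385; 566; 655; 133; 482; 1020; 1220; 1402];
 [:: 53; 1299; 774; 646; 931; 1107; 1375; 1267; 289; 1222; 343; 1026; 486; 138; 1180; 1050; 330; 169; 925; 1444; 1418; 1244; 658; 1156; 55; 123; 1177];
 [:: 339; 821; 1372; 278; 229; 639; 1197; 1277; 1353; 824; 1313; 699; 1099; 222; 693; 357; 404; 145; 1044; 1308; 949; 1240; 107; 1035; 1040; 71; 371];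
 [:: 1370; 1067; 875; 1145; 749; 13; 86; 405; 781; 1389; 1351; 617; 753; 484; 1432; 384; 79; 487; 1172; 328; 702; 1297; 299; 206; 1229; 812; 914]];
[:: [:: 174; 1374; 1276; 1201; 428; 311; 704; 1039; 680; 394; 175; 1369; 1337; 1007; 331; 455; 1245; 746; 1371; 1068; 1296; 446; 477; 482; 55; 71; 914];
 [:: 1168; 117; 784; 29; 1196; 310; 181; 149; 523; 951; 789; 553; 1009; 605; 25; 1176; 861; 312; 1254; 830; 499; 210; 133; 1156; 1040; 812; 836];
 [:: 864; 886; 500; 681; 465; 689; 1433; 430; 207; 1403; 64; 509; 1306; 1227; 738; 750; 497; 1390; 368; 574; 549; 655; 658; 1035; 1229; 101; 1218];
 [:: 819; 1235; 170; 144; 304; 30; 1100; 438; 333; 798; 547; 1136; 1086; 388; 426; 255; 1307; 1348; 592; 1304; 566; 1244; 107; 206; 1089; 1114; 881];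
 [:: 366; 274; 1225; 866; 45; 302; 374; 324; 726; 1030; 1324; 1320; 1303; 307; 495; 1108; 707; 1217; 318; 385; 1418; 1240; 299; 712; 166; 904; 212];
 [:: 1350; 1202; 1146; 61; 453; 803; 1236; 1219; 597; 642; 100; 157; 764; 367; 606; 260; 503; 1260; 575; 1444; 949; 1297; 481; 67; 1282; 249; 1356];
 [:: 459; 1109; 448; 225; 475; 594; 1354; 502; 1341; 335; 34; 316; 785; 971; 848; 672; 492; 1012; 925; 1308; 702; 120; 76; 869; 1428; 464; 1103];
 [:: 1119; 1340; 911; 806; 891; 1019; 402; 871; 952; 1427; 245; 1333; 121; 1118; 1047; 637; 284; 169; 1044; 328; 939; 1208; 376; 383; 77; 683; 696];
 [:: 468; 1331; 514; 916; 799; 434; 837; 1084; 1024; 456; 521; 1066; 829; 847; 35; 771; 330; 145; 1172; 1162; 115; 294; 478; 743; 1456; 845; 295];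
 [:: 626; 365; 700; 78; 651; 381; 839; 602; 1457; 797; 965; 129; 953; 1426; 1325; 1050; 404; 487; 807; 220; 185; 917; 1213; 1449; 1137; 725; 538];
 [:: 563; 270; 238; 1077; 1301; 42; 81; 905; 758; 1409; 474; 715; 645; 835; 1180; 357; 79; 720; 537; 1242; 1376; 1158; 1317; 872; 941; 976; 358];
 [:: 1096; 1259; 256; 337; 63; 131; 1399; 1329; 141; 1442; 1270; 389; 657; 138; 693; 384; 698; 1412; 737; 539; 818; 277; 1294; 705; 816; 682; 5];
 [:: 431; 1391; 729; 669; 926; 1416; 855; 1123; 544; 607; 140; 1387; 486; 222; 1432; 364; 996; 305; 805; 1438; 745; 65; 1257; 1261; 44; 1224; 1023];
 [:: 59; 969; 919; 315; 665; 248; 1312; 411; 1002; 469; 923; 1026; 1099; 484; 20; 649; 397; 1125; 1295; 664; 691; 168; 690; 633; 832; 66; 377];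
 [:: 983; 417; 400; 253; 372; 843; 271; 344; 1041; 247; 343; 699; 753; 398; 1174; 600; 1273; 1112; 878; 751; 731; 524; 1110; 828; 1275; 1248; 99];
 [:: 947; 988; 136; 407; 535; 24; 880; 934; 850; 1222; 1313; 617; 577; 894; 49; 204; 462; 203; 1349; 1335; 161; 1287; 961; 1332; 1163; 1183; 413];
 [:: 1; 511; 980; 401; 36; 1117; 591; 551; 289; 824; 1351; 1056; 167; 1121; 396; 11; 1441; 390; 838; 308; 259; 992; 531; 1445; 1300; 1015; 1045];
 [:: 1080; 378; 625; 1216; 946; 1226; 697; 1267; 1353; 1389; 80; 1001; 903; 1169; 193; 208; 986; 1008; 460; 1447; 1051; 454; 93; 929; 442; 491; 793];
 [:: 659; 1179; 942; 180; 380; 767; 1375; 1277; 781; 268; 319; 1420; 628; 485; 1262; 1413; 1269; 226; 740; 171; 1437; 96; 1228; 987; 267; 663; 7];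
 [:: 1187; 1072; 437; 353; 421; 1107; 1197; 405; 178; 558; 196; 191; 1264; 19; 254; 1385; 519; 427; 1127; 846; 1043; 91; 9; 890; 937; 1130; 265];
 [:: 958; 773; 703; 441; 931; 639; 86; 1159; 1111; 73; 125; 561; 955; 94; 28; 325; 264; 116; 354; 346; 92; 527; 966; 1178; 873; 676; 236];
 [:: 209; 292; 560; 646; 229; 13; 963; 1357; 582; 54; 772; 395; 1346; 849; 1060; 840; 615; 1265; 62; 176; 148; 150; 95; 1451; 326; 580; 1014];
 [:: 1034; 216; 774; 278; 749; 909; 1232; 724; 1190; 1419; 671; 572; 516; 668; 944; 1161; 355; 576; 1305; 410; 809; 51; 470; 114; 461; 489; 870];
 [:: 585; 1299; 1372; 1145; 634; 1272; 1411; 1355; 1280; 570; 1016; 603; 1401; 694; 1138; 599; 1142; 546; 6; 723; 1238; 1097; 1327; 564; 361; 1421; 4];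
 [:: 53; 821; 875; 827; 449; 841; 684; 23; 727; 1361; 112; 526; 97; 1053; 562; 583; 505; 244; 644; 275; 596; 52; 422; 717; 327; 1271; 1402];
 [:: 339; 1067; 1027; 252; 532; 782; 466; 37; 218; 667; 1322; 529; 1171; 679; 16; 811; 1193; 900; 1036; 823; 261; 718; 552; 1090; 82; 1220; 1177];
 [:: 1370; 1209; 320; 786; 1173; 1258; 1384; 567; 541; 1073; 858; 851; 1186; 902; 1231; 480; 143; 306; 1286; 309; 293; 711; 888; 1246; 1020; 123; 371]]].

Local Close Scope N_scope.
Definition s27 := mkp 1457 B27.
Lemma mohs27 : MOHS (27^2) 27 4.
Proof.
refine (@mohs_check ('I_1459) (27^2) 27 4 s27.1 (ordels 1458) (@ordels_all 1458) (ordels_uniq 1458) (fun _ => O, [::]) s27.2 _ _ _ _ _ _ _ _).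
- by rewrite card_ord.
- by [].
- by [].
- vm_compute; reflexivity.
- change (all (fun g : 'I_1459 => (g != 0%R) ==> (s27.1 g != s27.1 (- g)%R)) (ordels 1458)).
  vm_compute; reflexivity.
- vm_compute; reflexivity.
- vm_compute; reflexivity.
- vm_compute; reflexivity.
Qed.
Local Open Scope N_scope.
Definition B11 : seq (seq (seq N)) := [::
[:: [:: 1; 76; 218; 128; 25; 219; 78; 154; 157; 34; 191];
 [:: 152; 52; 22; 18; 158; 20; 82; 126; 65; 113; 98];
 [:: 140; 195; 92; 47; 209; 156; 66; 54; 227; 60; 8];
 [:: 183; 216; 93; 240; 23; 67; 49; 118; 107; 21; 35];
 [:: 207; 124; 203; 101; 222; 189; 77; 210; 19; 123; 235];
 [:: 168; 73; 26; 214; 215; 171; 146; 163; 188; 155; 125];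
 [:: 231; 151; 57; 131; 217; 142; 134; 121; 56; 187; 88];
 [:: 31; 80; 87; 185; 179; 202; 115; 7; 91; 61; 72];
 [:: 104; 117; 112; 130; 177; 170; 6; 132; 89; 190; 42];
 [:: 174; 50; 86; 79; 122; 48; 159; 213; 220; 37; 45];
 [:: 192; 197; 133; 153; 81; 143; 90; 12; 100; 176; 55]];
[:: [:: 1; 22; 209; 49; 19; 125; 151; 185; 170; 213; 176];
 [:: 76; 18; 156; 118; 123; 168; 57; 179; 6; 220; 55];
 [:: 218; 158; 66; 107; 235; 73; 131; 202; 132; 37; 192];
 [:: 128; 20; 54; 21; 207; 26; 217; 115; 89; 45; 197];
 [:: 25; 82; 227; 35; 124; 214; 142; 7; 190; 174; 133];
 [:: 219; 126; 60; 183; 203; 215; 134; 91; 42; 50; 153];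
 [:: 78; 65; 8; 216; 101; 171; 121; 61; 104; 86; 81];
 [:: 154; 113; 140; 93; 222; 146; 56; 72; 117; 79; 143];
 [:: 157; 98; 195; 240; 189; 163; 187; 31; 112; 122; 90];
 [:: 34; 152; 92; 23; 77; 188; 88; 80; 130; 48; 12];
 [:: 191; 52; 47; 67; 210; 155; 231; 87; 177; 159; 100]];
[:: [:: 1; 158; 227; 216; 189; 155; 57; 115; 42; 79; 12];
 [:: 76; 20; 60; 93; 77; 125; 131; 7; 104; 122; 100];
 [:: 218; 82; 8; 240; 210; 168; 217; 91; 117; 48; 176];
 [:: 128; 126; 140; 23; 19; 73; 142; 61; 112; 159; 55];
 [:: 25; 65; 195; 67; 123; 26; 134; 72; 130; 213; 192];
 [:: 219; 113; 92; 49; 235; 214; 121; 31; 177; 220; 197];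
 [:: 78; 98; 47; 118; 207; 215; 56; 80; 170; 37; 133];
 [:: 154; 152; 209; 107; 124; 171; 187; 87; 6; 45; 153];
 [:: 157; 52; 156; 21; 203; 146; 88; 185; 132; 174; 81];
 [:: 34; 22; 66; 35; 101; 163; 231; 179; 89; 50; 143];
 [:: 191; 18; 54; 183; 222; 188; 151; 202; 190; 86; 90]];
[:: [:: 1; 20; 8; 23; 123; 214; 56; 87; 132; 50; 90];
 [:: 76; 82; 140; 67; 235; 215; 187; 185; 89; 86; 12];
 [:: 218; 126; 195; 49; 207; 171; 88; 179; 190; 79; 100];
 [:: 128; 65; 92; 118; 124; 146; 231; 202; 42; 122; 176];
 [:: 25; 113; 47; 107; 203; 163; 151; 115; 104; 48; 55];
 [:: 219; 98; 209; 21; 101; 188; 57; 7; 117; 159; 192];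
 [:: 78; 152; 156; 35; 222; 155; 131; 91; 112; 213; 197];
 [:: 154; 52; 66; 183; 189; 125; 217; 61; 130; 220; 133];
 [:: 157; 22; 54; 216; 77; 168; 142; 72; 177; 37; 153];
 [:: 34; 18; 227; 93; 210; 73; 134; 31; 170; 45; 81];
 [:: 191; 158; 60; 240; 19; 26; 121; 80; 6; 174; 143]];
[:: [:: 1; 82; 195; 118; 203; 188; 131; 61; 177; 45; 143];
 [:: 76; 126; 92; 107; 101; 155; 217; 72; 170; 174; 90];
 [:: 218; 65; 47; 21; 222; 125; 142; 31; 6; 50; 12];
 [:: 128; 113; 209; 35; 189; 168; 134; 80; 132; 86; 100];
 [:: 25; 98; 156; 183; 77; 73; 121; 87; 89; 79; 176];
 [:: 219; 152; 66; 216; 210; 26; 56; 185; 190; 122; 55];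
 [:: 78; 52; 54; 93; 19; 214; 187; 179; 42; 48; 192];
 [:: 154; 22; 227; 240; 123; 215; 88; 202; 104; 159; 197];
 [:: 157; 18; 60; 23; 235; 171; 231; 115; 117; 213; 133];
 [:: 34; 158; 8; 67; 207; 146; 151; 7; 112; 220; 153];
 [:: 191; 20; 140; 49; 124; 163; 57; 91; 130; 37; 81]];
[:: [:: 1; 126; 47; 35; 77; 26; 187; 202; 117; 220; 81];
 [:: 76; 65; 209; 183; 210; 214; 88; 115; 112; 37; 143];
 [:: 218; 113; 156; 216; 19; 215; 231; 7; 130; 45; 90];
 [:: 128; 98; 66; 93; 123; 171; 151; 91; 177; 174; 12];
 [:: 25; 152; 54; 240; 235; 146; 57; 61; 170; 50; 100];
 [:: 219; 52; 227; 23; 207; 163; 131; 72; 6; 86; 176];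
 [:: 78; 22; 60; 67; 124; 188; 217; 31; 132; 79; 55];
 [:: 154; 18; 8; 49; 203; 155; 142; 80; 89; 122; 192];
 [:: 157; 158; 140; 118; 101; 125; 134; 87; 190; 48; 197];
 [:: 34; 20; 195; 107; 222; 168; 121; 185; 42; 159; 133];
 [:: 191; 82; 92; 21; 189; 73; 56; 179; 104; 213; 153]];
[:: [:: 1; 65; 156; 93; 235; 163; 217; 80; 190; 159; 153];
 [:: 76; 113; 66; 240; 207; 188; 142; 87; 42; 213; 81];
 [:: 218; 98; 54; 23; 124; 155; 134; 185; 104; 220; 143];
 [:: 128; 152; 227; 67; 203; 125; 121; 179; 117; 37; 90];
 [:: 25; 52; 60; 49; 101; 168; 56; 202; 112; 45; 12];
 [:: 219; 22; 8; 118; 222; 73; 187; 115; 130; 174; 100];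
 [:: 78; 18; 140; 107; 189; 26; 88; 7; 177; 50; 176];
 [:: 154; 158; 195; 21; 77; 214; 231; 91; 170; 86; 55];
 [:: 157; 20; 92; 35; 210; 215; 151; 61; 6; 79; 192];
 [:: 34; 82; 47; 183; 19; 171; 57; 72; 132; 122; 197];
 [:: 191; 126; 209; 216; 123; 146; 131; 31; 89; 48; 133]];
[:: [:: 1; 113; 54; 67; 101; 73; 88; 91; 6; 122; 133];
 [:: 76; 98; 227; 49; 222; 26; 231; 61; 132; 48; 153];
 [:: 218; 152; 60; 118; 189; 214; 151; 72; 89; 159; 81];
 [:: 128; 52; 8; 107; 77; 215; 57; 31; 190; 213; 143];
 [:: 25; 22; 140; 21; 210; 171; 131; 80; 42; 220; 90];
 [:: 219; 18; 195; 35; 19; 146; 217; 87; 104; 37; 12];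
 [:: 78; 158; 92; 183; 123; 163; 142; 185; 117; 45; 100];
 [:: 154; 20; 47; 216; 235; 188; 134; 179; 112; 174; 176];
 [:: 157; 82; 209; 93; 207; 155; 121; 202; 130; 50; 55];
 [:: 34; 126; 156; 240; 124; 125; 56; 115; 177; 86; 192];
 [:: 191; 65; 66; 23; 203; 168; 187; 7; 170; 79; 197]];
[:: [:: 1; 98; 60; 107; 210; 146; 142; 179; 130; 86; 197];
 [:: 76; 152; 8; 21; 19; 163; 134; 202; 177; 79; 133];
 [:: 218; 52; 140; 35; 123; 188; 121; 115; 170; 122; 153];
 [:: 128; 22; 195; 183; 235; 155; 56; 7; 6; 48; 81];
 [:: 25; 18; 92; 216; 207; 125; 187; 91; 132; 159; 143];
 [:: 219; 158; 47; 93; 124; 168; 88; 61; 89; 213; 90];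
 [:: 78; 20; 209; 240; 203; 73; 231; 72; 190; 220; 12];
 [:: 154; 82; 156; 23; 101; 26; 151; 31; 42; 37; 100];
 [:: 157; 126; 66; 67; 222; 214; 57; 80; 104; 45; 176];
 [:: 34; 65; 54; 49; 189; 215; 131; 87; 117; 174; 55];
 [:: 191; 113; 227; 118; 77; 171; 217; 185; 112; 50; 192]]].

Local Close Scope N_scope.
Definition s11 := mk3 B11.
Lemma mohs11 : MOHS 121 11 9.
Proof.
refine (@mohs_check (G3 : finZmodType) 121 11 9 s11.1 elsG3 elsG3_all elsG3_uniq (fun _ => O, [::]) s11.2 _ _ _ _ _ _ _ _).
- by rewrite cardG3.
- by [].
- by [].
- vm_compute; reflexivity.
- vm_compute; reflexivity.
- vm_compute; reflexivity.
- vm_compute; reflexivity.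
- vm_compute; reflexivity.
Qed.

Local Close Scope ring_scope.
Local Close Scope ring_scope.

Theorem theorem1p15 :
  (forall k : nat, k \in [:: 9; 21; 27] -> MOHS (k ^ 2) k 4) /\ MOHS 121 11 9.
Proof.
split; last exact: mohs11.
move=> k; rewrite !inE => /or3P [] /eqP ->.
- exact: mohs9.
- exact: mohs21.
- exact: mohs27.
Qed.
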